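(* Let $K\ge 2$ be an even integer, let $M\ge K/2$ be an integer, and let $\tau>0$ and $p_{\max}>0$. Let $\beta_1,\ldots,\beta_K>0$ satisfy $\beta_j>\beta_i$ for all $j\in\mathcal{K}_c=\{1,\ldots,K/2\}$ and all $i\in\mathcal{K}_e=\{K/2+1,\ldots,K\}$. Set $\bar M=M+1-K/2$. For a power vector $\mathbf{p}=(p_1,\ldots,p_K)^T$ with $p_k\ge 0$ define $$R_k(\mathbf{p})=\tau\log_2\!\left(1+p_k\beta_k\bar M\right)\ \text{for } k\in\mathcal{K}_c,\qquad R_k(\mathbf{p})=\tau\log_2\!\left(1+\frac{p_k\beta_k}{p_{k-K/2}\beta_k+1}\right)\ \text{for } k\in\mathcal{K}_e.$$ Consider the problem of maximizing $\sum_{k=1}^K R_k(\mathbf{p})$ over $\mathbf{p}\succeq 0$ subject to $\sum_{k=1}^K p_k\le p_{\max}$. Then a feasible $\mathbf{p}$ is a maximizer only if $p_k=0$ for all $k\in\mathcal{K}_e$, and the maximum is attained by a power vector with $p_k=0$ for all $k\in\mathcal{K}_e$; i.e., the sum rate is maximized if and only if $p_k=0$ for all $k\in\mathcal{K}_e$ (together with an optimal allocation among the cell-center users).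
   Context: This models downlink power-domain NOMA with perfect CSI from an $M$-antenna base station to $K$ single-antenna users, split into $K/2$ cell-center users (indices $\mathcal{K}_c$) and $K/2$ cell-edge users (indices $\mathcal{K}_e$); users $k$ and $k+K/2$ form a group sharing a zero-forcing beam. $\beta_k$ is the large-scale fading coefficient of user $k$, $p_k$ its normalized transmit power, $\tau$ the fraction of the coherence interval used for data. The rate expressions above are the (perfect-CSI) rates assigned to cell-center users (after successive interference cancellation) and cell-edge users (treating the in-group cell-center signal as noise). *)

(* Defs.v *)
From HB Require Import structures.
From mathcomp Require Import all_boot all_order all_algebra.
From mathcomp Require Import all_classical all_reals all_analysis.
Set Implicit Arguments. Unset Strict Implicit. Unset Printing Implicit Defensive.
Import Order.TTheory GRing.Theory Num.Theory.
Local Open Scope ring_scope.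

Definition log2 (R : realType) (x : R) : R := ln x / ln 2.

(* Users are indexed 0,...,K-1 (0-based): cell-center users k < K/2,
   cell-edge users K/2 <= k < K; edge user k is paired with center user k - K/2. *)
Definition rate (R : realType) (K M : nat) (tau : R) (beta p : nat -> R) (k : nat) : R :=
  let L := K./2 in
  let Mbar : R := (M + 1 - L)%:R in
  if (k < L)%N then tau * log2 (1 + p k * beta k * Mbar)
  else tau * log2 (1 + p k * beta k / (p (k - L)%N * beta k + 1)).

Definition sum_rate (R : realType) (K M : nat) (tau : R) (beta p : nat -> R) : R :=
  \sum_(0 <= k < K) rate K M tau beta p k.

Definition feasible (R : realType) (K : nat) (pmax : R) (p : nat -> R) : Prop :=
  (forall k, (k < K)%N -> 0 <= p k) /\ \sum_(0 <= k < K) p k <= pmax.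

Definition is_maximizer (R : realType) (K M : nat) (tau pmax : R) (beta p : nat -> R) : Prop :=
  feasible K pmax p /\
  forall q, feasible K pmax q -> sum_rate K M tau beta q <= sum_rate K M tau beta p.

(* Main.v *)
Require Import Defs.
From HB Require Import structures.
From mathcomp Require Import all_boot all_order all_algebra.
From mathcomp Require Import all_classical all_reals all_analysis.
From mathcomp Require Import ring lra zify.
Import Order.TTheory GRing.Theory Num.Theory.
Import numFieldNormedType.Exports.
Local Open Scope ring_scope.

Lemma ln_le_sub {R : realType} (x y : R) : 0 < x -> 0 < y -> ln y - ln x <= (y - x) / x.
Proof.
move=> x0 y0.
rewrite -ln_div ?posrE //.
have h := expR_ge1Dx (ln (y / x)).
rewrite lnK ?posrE ?divr_gt0 // in h.
have -> : (y - x) / x = y / x - 1 by field; rewrite gt_eqF.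
lra.
Qed.

Lemma pair_aux {R : realType} (a b x y : R) : 0 < b -> b <= a -> 0 <= x -> 0 <= y ->
  ln (1 + x * a) + ln (1 + y * b / (x * b + 1)) =
  ln ((1 + x * a) * (1 + (x + y) * b) / (x * b + 1)).
Proof.
move=> b0 ba x0 y0.
have ha : 0 < a by exact: lt_le_trans b0 ba.
have hd : 0 < x * b + 1 by nra.
rewrite -lnM ?posrE; last 2 first.
- nra.
- by have := divr_ge0 (mulr_ge0 y0 (ltW b0)) (ltW hd); lra.
congr ln. field. by rewrite gt_eqF.
Qed.

Lemma pair_le (R : realType) (a b x y : R) : 0 < b -> b <= a -> 0 <= x -> 0 <= y ->
  ln (1 + x * a) + ln (1 + y * b / (x * b + 1)) <= ln (1 + (x + y) * a).
Proof.
move=> b0 ba x0 y0.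
have ha : 0 < a by exact: lt_le_trans b0 ba.
have hd : 0 < x * b + 1 by nra.
rewrite pair_aux // ler_ln ?posrE; last 2 first.
- apply: divr_gt0 => //; apply: mulr_gt0; nra.
- nra.
rewrite ler_pdivrMr //.
have : 0 <= y * (a - b) by apply: mulr_ge0 => //; rewrite subr_ge0.
nra.
Qed.

Lemma pair_lt (R : realType) (a b x y : R) : 0 < b -> b < a -> 0 <= x -> 0 < y ->
  ln (1 + x * a) + ln (1 + y * b / (x * b + 1)) < ln (1 + (x + y) * a).
Proof.
move=> b0 ba x0 y0.
have ha : 0 < a by exact: lt_trans b0 ba.
have hd : 0 < x * b + 1 by nra.
rewrite (pair_aux a b x y b0 (ltW ba) x0 (ltW y0)) ltr_ln ?posrE; last 2 first.
- apply: divr_gt0 => //; apply: mulr_gt0; nra.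
- nra.
rewrite ltr_pdivrMr //.
have : 0 < y * (a - b) by apply: mulr_gt0 => //; rewrite subr_gt0.
nra.
Qed.
Lemma F_cont (R : realType) (c : nat -> R) n :
  continuous (fun mu : R => \sum_(0 <= i < n) Num.max 0 (mu - c i)).
Proof.
elim: n => [|n IH].
  move=> x; under eq_fun do rewrite big_geq //.
  exact: cst_continuous.
move=> x.
under eq_fun do rewrite big_nat_recr //=.
apply: (@continuousD _ _ _ (fun mu : R => \sum_(0 <= i < n) Num.max 0 (mu - c i)) (fun mu => Num.max 0 (mu - c n))); first exact: IH.
apply: (@continuous_max _ _ (fun=> 0) (fun mu => mu - c n)).
  exact: cst_continuous.
apply: continuousB; first by move=> ?.
exact: cst_continuous.
Qed.

Lemma waterfill (R : realType) (L : nat) (a : nat -> R) (P : R) :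
  (0 < L)%N -> (forall c, (c < L)%N -> 0 < a c) -> 0 < P ->
  exists p : nat -> R, (forall c, 0 <= p c) /\ \sum_(0 <= c < L) p c = P /\
  forall r : nat -> R, (forall c, (c < L)%N -> 0 <= r c) -> \sum_(0 <= c < L) r c <= P ->
    \sum_(0 <= c < L) ln (1 + r c * a c) <= \sum_(0 <= c < L) ln (1 + p c * a c).
Proof.
move=> L0 apos P0.
pose F := fun mu : R => \sum_(0 <= i < L) Num.max 0 (mu - (a i)^-1).
have F0 : F 0 = 0.
  rewrite /F big1_seq // => i; rewrite mem_index_iota => /andP[_ hi].
  rewrite sub0r; apply/max_idPl; rewrite oppr_le0 invr_ge0; exact: ltW (apos _ hi).
pose b := P + (a 0%N)^-1.
have Fb : P <= F b.
  rewrite /F big_ltn // -[P]addr0; apply: lerD.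
    rewrite /b addrK; by rewrite le_max lexx orbT.
  apply: sumr_ge0 => i _; by rewrite le_max lexx.
have : exists2 mu, mu \in `[0, b] & F mu = P.
  apply: IVT.
  - rewrite /b; apply: addr_ge0; [exact: ltW| rewrite invr_ge0; exact: ltW (apos _ L0)].
  - apply: continuous_subspaceT => x; exact: F_cont.
  - rewrite F0; apply/andP; split.
      by rewrite ge_min (ltW P0).
    by rewrite le_max Fb orbT.
case=> mu _ FmuP.
have mu0 : 0 < mu.
  rewrite ltNge; apply/negP => mule.
  suff : F mu = 0 by rewrite FmuP => /eqP; rewrite gt_eqF.
  rewrite /F big1_seq // => i; rewrite mem_index_iota => /andP[_ hi].
  apply/max_idPl; rewrite subr_le0; apply: (le_trans mule).
  rewrite invr_ge0; exact: ltW (apos _ hi).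
exists (fun c => Num.max 0 (mu - (a c)^-1)); split; [|split].
- move=> c; by rewrite le_max lexx.
- exact: FmuP.
move=> r rpos rsum.

have key : forall c, (c < L)%N ->
  ln (1 + r c * a c) - ln (1 + Num.max 0 (mu - (a c)^-1) * a c) <=
  (r c - Num.max 0 (mu - (a c)^-1)) / mu.
  move=> c hc.
  have ac := apos _ hc; have rc := rpos _ hc.
  set pc := Num.max 0 _.
  have pc0 : 0 <= pc by by rewrite le_max lexx.
  apply: le_trans (ln_le_sub _ _ _ _) _.
  - by have := mulr_ge0 pc0 (ltW ac); lra.
  - by have := mulr_ge0 rc (ltW ac); lra.
  have -> : 1 + r c * a c - (1 + pc * a c) = a c * (r c - pc) by ring.
  have e : (a c)^-1 * a c = 1 by rewrite mulVf // gt_eqF.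
  rewrite /pc; case: (leP 0 (mu - (a c)^-1)) => h.
  - have -> : 1 + (mu - (a c)^-1) * a c = mu * a c.
      by rewrite mulrBl e; ring.
    have -> : a c * (r c - (mu - (a c)^-1)) / (mu * a c) = (r c - (mu - (a c)^-1)) / mu.
      by field; rewrite !gt_eqF.
    exact: lexx.
  - rewrite subr0 mul0r addr0 divr1 ler_pdivlMr //.
    have h2 : mu * a c < 1.
      have h3 : mu < (a c)^-1 by lra.
      by have := ltr_pM2r ac mu (a c)^-1; rewrite e h3 => ->.
    nra.
have S1 : \sum_(0 <= c < L) (ln (1 + r c * a c) - ln (1 + Num.max 0 (mu - (a c)^-1) * a c))
    <= \sum_(0 <= c < L) ((r c - Num.max 0 (mu - (a c)^-1)) / mu).
  by apply: ler_sum_nat => c /andP[_ hc]; exact: key.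
have S2 : \sum_(0 <= c < L) ((r c - Num.max 0 (mu - (a c)^-1)) / mu) <= 0.
  rewrite -mulr_suml sumrB.
  have -> : \sum_(0 <= c < L) Num.max 0 (mu - (a c)^-1) = P by exact: FmuP.
  rewrite pmulr_lle0 ?invr_gt0 //; lra.
rewrite sumrB in S1.
lra.
Qed.


Lemma sum_split (R : realType) (L : nat) (f : nat -> R) :
  \sum_(0 <= k < L + L) f k = \sum_(0 <= c < L) (f c + f (c + L)%N).
Proof.
rewrite (big_cat_nat (n := L)) //= ?leq_addr //.
rewrite -{2}[L]add0n big_addn addnK big_split //.
Qed.

Lemma sum_lt (R : realType) (L c : nat) (f g : nat -> R) : (c < L)%N ->
  (forall i, (i < L)%N -> f i <= g i) -> f c < g c ->
  \sum_(0 <= i < L) f i < \sum_(0 <= i < L) g i.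
Proof.
move=> hc hle hlt.
rewrite (big_cat_nat (n := c) (leq0n c) (ltnW hc)) /=.
rewrite [X in _ < X](big_cat_nat (n := c) (leq0n c) (ltnW hc)) /=.
rewrite !(big_ltn hc).
apply: ler_ltD.
  by apply: ler_sum_nat => i /andP[_ hi]; apply: hle; lia.
apply: ltr_leD => //.
by apply: ler_sum_nat => i /andP[_ hi]; apply: hle.
Qed.

Lemma rate_c (R : realType) K M (tau : R) beta p c : (c < K./2)%N ->
  rate K M tau beta p c =
  tau / ln 2 * ln (1 + p c * (beta c * (M + 1 - K./2)%:R)).
Proof.
move=> hc; by rewrite /rate hc /log2 !mulrA mulrAC.
Qed.

Lemma rate_e (R : realType) K M (tau : R) beta p c : (c < K./2)%N ->
  rate K M tau beta p (c + K./2)%N =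
  tau / ln 2 * ln (1 + p (c + K./2)%N * beta (c + K./2)%N / (p c * beta (c + K./2)%N + 1)).
Proof.
move=> hc; rewrite /rate ifF; last by apply/negbTE; rewrite -leqNgt leq_addl.
rewrite addnK /log2; ring.
Qed.

Lemma rate_ce {R : realType} {K M : nat} {tau : R} {beta : nat -> R} (p : nat -> R) {c : nat} :
  (c < K./2)%N ->
  rate K M tau beta p c + rate K M tau beta p (c + K./2)%N =
  tau / ln 2 * (ln (1 + p c * (beta c * (M + 1 - K./2)%:R)) +
     ln (1 + p (c + K./2)%N * beta (c + K./2)%N / (p c * beta (c + K./2)%N + 1))).
Proof. by move=> hc; rewrite rate_e // rate_c // mulrDr. Qed.

Theorem lemma1 (R : realType) (K M : nat) (tau pmax : R) (beta : nat -> R) :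
  (2 <= K)%N -> ~~ odd K -> (K./2 <= M)%N -> 0 < tau -> 0 < pmax ->
  (forall k, (k < K)%N -> 0 < beta k) ->
  (forall j i, (j < K./2)%N -> (K./2 <= i < K)%N -> beta i < beta j) ->
  (forall p, is_maximizer K M tau pmax beta p ->
     forall k, (K./2 <= k < K)%N -> p k = 0) /\
  (exists p, is_maximizer K M tau pmax beta p /\
     forall k, (K./2 <= k < K)%N -> p k = 0).
Proof.
move=> K2 evK LM tau0 pmax0 bpos bord.
have hK : K = (K./2 + K./2)%N.
  by rewrite addnn -{1}(odd_double_half K) (negbTE evK) add0n.
have L0 : (0 < K./2)%N by lia.
set Mb : R := (M + 1 - K./2)%:R.
have Mb1 : 1 <= Mb by rewrite /Mb ler1n; lia.
set C := tau / ln (2 : R).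
have C0 : 0 < C by rewrite /C divr_gt0 // ln_gt0 // ltr1n.
have split : forall f : nat -> R, \sum_(0 <= k < K) f k = \sum_(0 <= c < K./2) (f c + f (c + K./2)%N).
  by move=> f; rewrite [X in index_iota 0 X]hK sum_split.
have srate : forall p, sum_rate K M tau beta p =
   \sum_(0 <= c < K./2) (rate K M tau beta p c + rate K M tau beta p (c + K./2)%N).
  by move=> p; rewrite /sum_rate split.
have bL : forall c, (c < K./2)%N -> beta (c + K./2)%N < beta c * Mb.
  move=> c hc; apply: (lt_le_trans (bord c (c + K./2)%N hc _)).
    apply/andP; split; lia.
  by rewrite ler_peMr // ltW // bpos //; lia.
have bpL : forall c, (c < K./2)%N -> 0 < beta (c + K./2)%N by move=> c hc; apply: bpos; lia.
split.
  move=> p [[ppos psum] pmax_] k /andP[Lk kK].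
  case: (eqVneq (p k) 0) => // pk.
  have pkpos : 0 < p k by rewrite lt_def pk ppos.
  pose c := (k - K./2)%N.
  have hkc : k = (c + K./2)%N by rewrite /c subnK.
  have hc : (c < K./2)%N by rewrite /c; lia.
  pose q := fun i => if i == c then p c + p k else if i == k then 0 else p i.
  have q1 : q c = p c + p k by rewrite /q eqxx.
  have q2 : q k = 0 by rewrite /q ifF ?eqxx //; apply/eqP; lia.
  have q3 : forall i, i != c -> i != k -> q i = p i by move=> i h1 h2; rewrite /q (negbTE h1) (negbTE h2).
  have fq : feasible K pmax q.
    split.
      move=> i hi; rewrite /q; case: eqP => _.
        by apply: addr_ge0; apply: ppos; lia.
      by case: eqP => _ //; apply: ppos.
    rewrite split; rewrite split in psum; apply: le_trans psum; rewrite le_eqVlt; apply/orP; left; apply/eqP.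
    apply: eq_big_nat => i /andP[_ hi].
    case: (eqVneq i c) => [->|ne].
      by rewrite q1 -hkc q2 addr0.
    rewrite q3 //; last by apply/eqP; lia.
    rewrite q3 //; apply/eqP; lia.
  have := pmax_ q fq.
  rewrite !srate => H.
  suff : \sum_(0 <= c0 < K./2) (rate K M tau beta p c0 + rate K M tau beta p (c0 + K./2)%N) <
         \sum_(0 <= c0 < K./2) (rate K M tau beta q c0 + rate K M tau beta q (c0 + K./2)%N) by lra.
  apply: (@sum_lt _ _ c) => //.
    move=> i hi; case: (eqVneq i c) => [->|ne].
      rewrite (rate_ce p hc) (rate_ce q hc) ler_pM2l // -hkc q1 q2 mul0r mul0r addr0 ln1 addr0.
      apply: pair_le => //; [exact: bpos kK | rewrite hkc; exact: ltW (bL _ hc) | apply: ppos; lia | exact: ltW].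
    rewrite (rate_ce p hi) (rate_ce q hi) q3 //; last by apply/eqP; lia.
    rewrite (q3 (i + K./2)%N) //; apply/eqP; lia.
  rewrite (rate_ce p hc) (rate_ce q hc) ltr_pM2l // -hkc q1 q2 mul0r mul0r addr0 ln1 addr0.
  apply: pair_lt => //; [exact: bpos kK | rewrite hkc; exact: bL | apply: ppos; lia].
have [w [wpos [wsum wopt]]] := @waterfill R K./2 (fun c => beta c * Mb) pmax L0
  (fun c hc => mulr_gt0 (bpos c (leq_trans hc (leq_trans (leq_addr K./2 K./2) (eq_leq (esym hK))))) (lt_le_trans ltr01 Mb1)) pmax0.
pose p := fun i => if (i < K./2)%N then w i else 0.
have pc : forall c, (c < K./2)%N -> p c = w c by move=> c hc; rewrite /p hc.
have pe : forall c, (c < K./2)%N -> p (c + K./2)%N = 0 by move=> c hc; rewrite /p ifF //; apply/negbTE; lia.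
exists p; split; last first.
  by move=> k /andP[Lk _]; rewrite /p ifF //; apply/negbTE; lia.
have fp : feasible K pmax p.
  split.
    by move=> i _; rewrite /p; case: ifP.
  rewrite split -wsum le_eqVlt; apply/orP; left; apply/eqP.
  by apply: eq_big_nat => i /andP[_ hi]; rewrite pc // pe // addr0.
split => // q [qpos qsum].
rewrite !srate.
apply: (le_trans (y := C * \sum_(0 <= c < K./2) ln (1 + (q c + q (c + K./2)%N) * (beta c * Mb)))).
  rewrite mulr_sumr; apply: ler_sum_nat => i /andP[_ hi].
  rewrite (rate_ce q hi) ler_pM2l //.
  apply: pair_le => //; [exact: bpL hi | exact: ltW (bL _ hi) | apply: qpos; lia | apply: qpos; lia].
have -> : \sum_(0 <= c < K./2) (rate K M tau beta p c + rate K M tau beta p (c + K./2)%N)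
   = C * \sum_(0 <= c < K./2) ln (1 + w c * (beta c * Mb)).
  rewrite mulr_sumr; apply: eq_big_nat => i /andP[_ hi].
  by rewrite (rate_ce p hi) pc // pe // !mul0r addr0 ln1 addr0.
rewrite ler_pM2l //.
apply: (wopt (fun c => q c + q (c + K./2)%N)).
  move=> c hc; apply: addr_ge0; apply: qpos; lia.
by rewrite -split.
Qed.
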